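(* Let $W$ be a finite group acting on an affine variety $X$ and let $X/W=\operatorname{Spec}\mathcal{O}(X)^W$. Then $\mathcal{D}(X,X/W)=\mathcal{D}(X)^W$ and $\overline{\mathcal{D}}(X,X/W)=\overline{\mathcal{D}}(X)^W$.
   Context: Varieties are over $\mathbb{C}$ and irreducible. $\mathcal{D}(X)$ is the algebra of ($\mathbb{C}$-linear, Grothendieck) differential operators on $\mathcal{O}(X)$, filtered by order, with associated graded algebra $\overline{\mathcal{D}}(X)$; $W$ acts on both by conjugation. $\mathcal{D}(X,X/W)=\{D\in\mathcal{D}(X): D(\mathcal{O}(X)^W)\subseteq\mathcal{O}(X)^W\}$ with induced filtration $\mathcal{D}(X,X/W)\cap\mathcal{D}(X)_{\le d}$ and associated graded algebra $\overline{\mathcal{D}}(X,X/W)\subseteq\overline{\mathcal{D}}(X)$. *)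

(* Defs.v *)
From HB Require Import structures.
From mathcomp Require Import all_boot all_order all_algebra all_fingroup.
From mathcomp Require Import reals.
From mathcomp Require Import complex.
Set Implicit Arguments. Unset Strict Implicit. Unset Printing Implicit Defensive.
Import Order.TTheory GRing.Theory Num.Theory.
Local Open Scope ring_scope.

(* The ground field is C := R[i] for a real field R (realType = complete
   archimedean real closed field, i.e. the real numbers). *)
Notation Cx R := (R[i])%type.

Section DiffOps.
Variables (K : fieldType) (A : comAlgType K).

Definition klinear (D : A -> A) : Prop :=
  forall (c : K) (x y : A), D (c *: x + y) = c *: D x + D y.

Definition comm_mul (D : A -> A) (a : A) : A -> A := fun b => D (a * b) - a * D b.

(* Grothendieck's order filtration: D_{<=0} = End_A(A), and
   D_{<= n+1} = { D C-linear | [D, a] in D_{<= n} for all a in A }. *)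
Fixpoint ord_le (n : nat) (D : A -> A) : Prop :=
  match n with
  | 0 => klinear D /\ forall a b : A, D (a * b) = a * D b
  | n'.+1 => klinear D /\ forall a : A, ord_le n' (comm_mul D a)
  end.

(* D_{<= d-1}, with D_{<= -1} = 0 *)
Definition ord_lt (d : nat) (D : A -> A) : Prop :=
  match d with
  | 0 => forall a, D a = 0
  | d'.+1 => ord_le d' D
  end.

Definition diffop (D : A -> A) : Prop := exists n, ord_le n D.

Definition fsub (D E : A -> A) : A -> A := fun a => D a - E a.

Definition fin_gen_alg : Prop :=
  exists s : seq A, forall P : pred A,
    1 \in P ->
    (forall a b, a \in P -> b \in P -> (a + b \in P) && (a * b \in P)) ->
    (forall (c : K) a, a \in P -> c *: a \in P) ->
    {subset s <= P} -> forall a, a \in P.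

Definition is_domain : Prop :=
  (1 : A) != 0 /\ forall a b : A, a * b = 0 -> a = 0 \/ b = 0.

Definition alg_action (gT : finGroupType) (act : gT -> A -> A) : Prop :=
  (forall a, act 1%g a = a) /\
  (forall g h a, act (g * h)%g a = act g (act h a)) /\
  (forall g, klinear (act g)) /\
  (forall g a b, act g (a * b) = act g a * act g b) /\
  (forall g, act g 1 = 1).

Definition invariant (gT : finGroupType) (act : gT -> A -> A) (a : A) : Prop :=
  forall g, act g a = a.

Definition conj_op (gT : finGroupType) (act : gT -> A -> A) (g : gT) (D : A -> A)
  : A -> A := fun a => act g (D (act g^-1%g a)).

Definition W_inv_op (gT : finGroupType) (act : gT -> A -> A) (D : A -> A) : Prop :=
  diffop D /\ forall g a, conj_op act g D a = D a.

(* D(X, X/W) *)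
Definition preserves_inv (gT : finGroupType) (act : gT -> A -> A) (D : A -> A) : Prop :=
  diffop D /\ forall a, invariant act a -> invariant act (D a).

(* Degree-d homogeneous pieces, for D in D_{<=d}, of the class [D] in
   gr_d D(X) = D_{<=d} / D_{<=d-1}:
   [D] lies in gr_d D(X,X/W) = image of D(X,X/W) cap D_{<=d} *)
Definition gr_in_sub (gT : finGroupType) (act : gT -> A -> A) (d : nat) (D : A -> A)
  : Prop :=
  exists D', preserves_inv act D' /\ ord_le d D' /\ ord_lt d (fsub D D').

(* [D] is fixed by the induced W-action on gr_d D(X) *)
Definition gr_W_inv (gT : finGroupType) (act : gT -> A -> A) (d : nat) (D : A -> A)
  : Prop :=
  forall g, ord_lt d (fsub (conj_op act g D) D).

End DiffOps.

(* Main.v *)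
Require Import Defs.
From HB Require Import structures.
From mathcomp Require Import all_boot all_order all_algebra all_fingroup.
From mathcomp Require Import reals complex ring.
Set Implicit Arguments. Unset Strict Implicit. Unset Printing Implicit Defensive.
Import GRing.Theory Num.Theory.
Local Open Scope ring_scope.
Section Gen.
Variables (K : fieldType) (A : comAlgType K).

Lemma klinear_ext (D E : A -> A) : klinear D -> (forall x, D x = E x) -> klinear E.
Proof. by move=> HD H c x y; rewrite -!H HD. Qed.

Lemma ord_le_ext n (D E : A -> A) : ord_le n D -> (forall x, D x = E x) -> ord_le n E.
Proof.
elim: n D E => [|n IH] D E /= [Hl H] HE; split; first exact: klinear_ext HE.
  by move=> a b; rewrite -!HE.
exact: klinear_ext HE.
move=> a; apply: IH (H a) _ => x; by rewrite /comm_mul !HE.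
Qed.

Lemma ord_le_klinear n (D : A -> A) : ord_le n D -> klinear D.
Proof. by case: n => [|n] /= []. Qed.

Lemma klinearD (D : A -> A) : klinear D -> forall x y, D (x + y) = D x + D y.
Proof. by move=> H x y; rewrite -[x in LHS]scale1r H scale1r. Qed.

Lemma klinear0 (D : A -> A) : klinear D -> D 0 = 0.
Proof. by move=> H; apply: (addrI (D 0)); rewrite [RHS]addr0 -klinearD // addr0. Qed.

Lemma ord_le_add n (D E F : A -> A) : ord_le n D -> ord_le n E ->
  (forall x, F x = D x + E x) -> ord_le n F.
Proof.
elim: n D E F => [|n IH] D E F /= [HlD HD] [HlE HE] HF; split.
- by move=> c x y; rewrite !HF HlD HlE scalerDr; ring.
- by move=> a b; rewrite !HF HD HE mulrDr.
- by move=> c x y; rewrite !HF HlD HlE scalerDr; ring.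
- move=> a; apply: (IH _ _ _ (HD a) (HE a)) => x; rewrite /comm_mul !HF; ring.
Qed.

Lemma ord_le_scale n (c : K) (D F : A -> A) : ord_le n D ->
  (forall x, F x = c *: D x) -> ord_le n F.
Proof.
elim: n D F => [|n IH] D F /= [HlD HD] HF; split.
- by move=> k x y; rewrite !HF HlD scalerDr !scalerA mulrC.
- by move=> a b; rewrite !HF HD scalerAr.
- by move=> k x y; rewrite !HF HlD scalerDr !scalerA mulrC.
- move=> a; apply: (IH _ _ (HD a)) => x; rewrite /comm_mul !HF scalerBr scalerAr //.
Qed.

Lemma ord_le_zero n (F : A -> A) : (forall x, F x = 0) -> ord_le n F.
Proof.
elim: n F => [|n IH] F HF /=; split.
- by move=> k x y; rewrite !HF scaler0 addr0.
- by move=> a b; rewrite !HF mulr0.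
- by move=> k x y; rewrite !HF scaler0 addr0.
- by move=> a; apply: IH => x; rewrite /comm_mul !HF mulr0 subr0.
Qed.

Lemma ord_le_sub n (D E : A -> A) : ord_le n D -> ord_le n E -> ord_le n (fsub D E).
Proof.
move=> HD HE; apply: (ord_le_add HD (@ord_le_scale n (-1) E (fun x => -1 *: E x) HE (fun _ => erefl))) => x.
by rewrite /fsub scaleN1r.
Qed.

Lemma ord_le_sum n (I : Type) (r : seq I) (Ds : I -> A -> A) (F : A -> A) :
  (forall i, ord_le n (Ds i)) -> (forall x, F x = \sum_(i <- r) Ds i x) -> ord_le n F.
Proof.
elim: r F => [|i r IH] F HDs HF.
  by apply: ord_le_zero => x; rewrite HF big_nil.
apply: (ord_le_add (HDs i) (IH (fun x => \sum_(j <- r) Ds j x) HDs (fun x => erefl))).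
by move=> x; rewrite HF big_cons.
Qed.

Lemma ord_lt_ext d (D E : A -> A) : ord_lt d D -> (forall x, D x = E x) -> ord_lt d E.
Proof. by case: d => [|d] /= H HE; [move=> a; rewrite -HE H | exact: ord_le_ext HE]. Qed.

Lemma ord_lt_add d (D E F : A -> A) : ord_lt d D -> ord_lt d E ->
  (forall x, F x = D x + E x) -> ord_lt d F.
Proof.
case: d => [|d] /= HD HE HF; last exact: ord_le_add HD HE HF.
by move=> a; rewrite HF HD HE addr0.
Qed.

Lemma ord_lt_scale d (c : K) (D F : A -> A) : ord_lt d D ->
  (forall x, F x = c *: D x) -> ord_lt d F.
Proof.
case: d => [|d] /= HD HF; last exact: ord_le_scale HD HF.
by move=> a; rewrite HF HD scaler0.
Qed.

Lemma ord_lt_sum d (I : Type) (r : seq I) (Ds : I -> A -> A) (F : A -> A) :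
  (forall i, ord_lt d (Ds i)) -> (forall x, F x = \sum_(i <- r) Ds i x) -> ord_lt d F.
Proof.
case: d => [|d] /= HDs HF; last exact: ord_le_sum HDs HF.
by move=> a; rewrite HF; apply: big1 => i _; rewrite HDs.
Qed.

Lemma comm_mulC (E : A -> A) a b x :
  comm_mul (comm_mul E b) a x = comm_mul (comm_mul E a) b x.
Proof. by rewrite /comm_mul mulrCA; ring. Qed.

End Gen.
Section Act.
Variables (K : fieldType) (A : comAlgType K) (gT : finGroupType)
  (act : gT -> A -> A) (Hact : alg_action act).

Lemma act1 a : act 1%g a = a. Proof. by case: Hact. Qed.
Lemma actMg g h a : act (g * h)%g a = act g (act h a). Proof. by case: Hact => _ []. Qed.
Lemma act_lin g : klinear (act g). Proof. by case: Hact => _ [] _ []. Qed.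
Lemma actM g a b : act g (a * b) = act g a * act g b. Proof. by case: Hact => _ [] _ [] _ []. Qed.
Lemma act_one g : act g 1 = 1. Proof. by case: Hact => _ [] _ [] _ []. Qed.
Lemma actD g a b : act g (a + b) = act g a + act g b. Proof. have := act_lin g. move=> H. exact: (klinearD H). Qed.
Lemma act0 g : act g 0 = 0. Proof. exact: klinear0 (act_lin g). Qed.
Lemma actZ g (c : K) a : act g (c *: a) = c *: act g a.
Proof. by rewrite -[c *: a]addr0 (act_lin g) act0 addr0. Qed.
Lemma actN g a : act g (- a) = - act g a.
Proof. by rewrite -scaleN1r actZ scaleN1r. Qed.
Lemma actB g a b : act g (a - b) = act g a - act g b.
Proof. by rewrite actD actN. Qed.
Lemma actK g a : act g (act g^-1 a) = a.
Proof. by rewrite -actMg mulgV act1. Qed.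
Lemma actKV g a : act g^-1 (act g a) = a.
Proof. by rewrite -actMg mulVg act1. Qed.

Definition actf (g : gT) : A -> A := act g.
HB.instance Definition _ g := GRing.isZmodMorphism.Build A A (actf g) (actB g).
HB.instance Definition _ g := GRing.isMonoidMorphism.Build A A (actf g) (act_one g, actM g).

Definition orbit_s (b : A) : seq A := undup [seq act h b | h <- enum gT].

Lemma orbit_perm g b : perm_eq (map (act g) (orbit_s b)) (orbit_s b).
Proof.
apply: uniq_perm.
- rewrite map_inj_uniq ?undup_uniq //; exact: can_inj (actKV g).
- exact: undup_uniq.
move=> x; apply/mapP/idP.
- case=> y; rewrite mem_undup => /mapP [h _ ->] ->.
  by rewrite mem_undup -actMg; apply/mapP; exists (g * h)%g; rewrite ?mem_enum.
- rewrite mem_undup => /mapP [h _ ->]; exists (act (g^-1 * h)%g b); last by rewrite actMg actK.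
  by rewrite mem_undup; apply/mapP; exists (g^-1 * h)%g; rewrite ?mem_enum.
Qed.

Lemma orbit_mem b : b \in orbit_s b.
Proof. by rewrite mem_undup; apply/mapP; exists 1%g; rewrite ?mem_enum ?act1. Qed.

Definition opoly (b : A) : {poly A} := \prod_(c <- orbit_s b) ('X - c%:P).

Lemma opoly_inv b i : Defs.invariant act (opoly b)`_i.
Proof.
move=> g; rewrite -[act g _]/(actf g _) -coef_map rmorph_prod /=.
under eq_bigr do rewrite map_polyXsubC.
by rewrite -(big_map (actf g) xpredT (fun c => 'X - c%:P)) (perm_big _ (orbit_perm g b)).
Qed.

Lemma deriv_horner (delta : A -> A) (b : A)
  (Hadd : forall x y, delta (x + y) = delta x + delta y)
  (Hmul : forall x y, delta (x * y) = delta x * y + x * delta y)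
  (Hinv : forall a, Defs.invariant act a -> delta a = 0) :
  forall p : {poly A}, (forall i, Defs.invariant act p`_i) -> delta p.[b] = p^`().[b] * delta b.
Proof.
have d0 : delta 0 = 0.
  by apply: (addrI (delta 0)); rewrite [RHS]addr0 -Hadd addr0.
move=> p; elim/poly_ind: p => [|p c IH] Hp; first by rewrite horner0 deriv0 horner0 mul0r.
have Hc : Defs.invariant act c by move: (Hp 0%N); rewrite coefD coefMX coefC /= add0r.
have Hp' : forall i, Defs.invariant act p`_i.
  by move=> i; move: (Hp i.+1); rewrite coefD coefMX coefC /= addr0.
rewrite hornerMXaddC derivMXaddC Hadd Hmul IH // (Hinv c) // hornerD hornerM hornerX.
ring.
Qed.


Lemma prod_nz (Hdom : is_domain A) (b : A) (s : seq A) :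
  b \notin s -> \prod_(c <- s) (b - c) != 0.
Proof.
case: Hdom => H1 Hd; elim: s => [|c s IH]; first by rewrite big_nil.
rewrite in_cons negb_or => /andP [Hbc Hs]; rewrite big_cons.
apply/eqP => /Hd [/eqP|/eqP]; last by apply/negP; exact: IH.
by rewrite subr_eq0; apply/negP.
Qed.

Lemma deriv_zero (Hdom : is_domain A) (delta : A -> A)
  (Hadd : forall x y, delta (x + y) = delta x + delta y)
  (Hmul : forall x y, delta (x * y) = delta x * y + x * delta y)
  (Hinv : forall a, Defs.invariant act a -> delta a = 0) (b : A) : delta b = 0.
Proof.
have d0 : delta 0 = 0.
  by apply: (addrI (delta 0)); rewrite [RHS]addr0 -Hadd addr0.
have Hperm := perm_to_rem (orbit_mem b).
set g := \prod_(c <- rem b (orbit_s b)) ('X - c%:P).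
have Hf : opoly b = ('X - b%:P) * g by rewrite /opoly (perm_big _ Hperm) big_cons.
have := @deriv_horner delta b Hadd Hmul Hinv _ (opoly_inv b).
rewrite Hf hornerM hornerXsubC subrr mul0r d0 derivM derivXsubC mul1r.
rewrite hornerD hornerM hornerXsubC subrr mul0r addr0 => /esym.
have : g.[b] != 0.
  rewrite /g horner_prod; under eq_bigr do rewrite hornerXsubC.
  by apply: prod_nz => //; rewrite mem_rem_uniqF // undup_uniq.
case: Hdom => _ Hd gnz /Hd [H|//]; by rewrite H eqxx in gnz.
Qed.


Lemma inv_mul a c : Defs.invariant act a -> Defs.invariant act c -> Defs.invariant act (a * c).
Proof. by move=> Ha Hc g; rewrite actM Ha Hc. Qed.

Lemma inv_one : Defs.invariant act 1.
Proof. by move=> g; rewrite act_one. Qed.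

Lemma drop0 (Hdom : is_domain A) (F : A -> A) : ord_le 1 F ->
  (forall a, Defs.invariant act a -> F a = a * F 1) -> forall b x, F (b * x) = b * F x.
Proof.
move=> [HlF HF] Hinv.
have key : forall b x, F (b * x) = b * F x + x * F b - x * b * F 1.
  move=> b x; have [_ H] := HF b; have := H x 1.
  rewrite /comm_mul !mulr1 => E; rewrite -[F (b * x)](subrK (b * F x)) E; ring.
have Hd := @deriv_zero Hdom (fun b => F b - b * F 1).
have Hz : forall b, F b = b * F 1.
  move=> b; apply/eqP; rewrite -subr_eq0; apply/eqP; apply: Hd => //.
  - by move=> x y; rewrite (klinearD HlF); ring.
  - by move=> x y; rewrite key; ring.
  - by move=> a Ha; rewrite Hinv // subrr.
by move=> b x; rewrite Hz [F x]Hz mulrA.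
Qed.

Lemma comm_mul_def (F : A -> A) a x : comm_mul F a x = F (a * x) - a * F x.
Proof. by []. Qed.

Lemma drop_ord (Hdom : is_domain A) n (E : A -> A) : ord_le n.+1 E ->
  (forall a, Defs.invariant act a -> forall x, comm_mul E a x = 0) -> ord_le n E.
Proof.
elim: n E => [|n IH] E HE Hc.
  split; first exact: ord_le_klinear HE.
  apply: drop0 => // a Ha; apply/eqP; rewrite -subr_eq0; apply/eqP.
  by have := Hc a Ha 1; rewrite /comm_mul mulr1.
case: HE => HlE HE; split => // b; apply: IH (HE b) _ => a Ha x.
by rewrite comm_mulC comm_mul_def !Hc // mulr0 subrr.
Qed.

Lemma vanish_zero (Hdom : is_domain A) n (E : A -> A) : ord_le n E ->
  (forall a, Defs.invariant act a -> E a = 0) -> forall x, E x = 0.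
Proof.
elim: n E => [|n IH] E HE Hv.
  by case: HE => _ H x; rewrite -[x]mulr1 H Hv ?mulr0 //; exact: inv_one.
have Hc : forall a, Defs.invariant act a -> forall x, comm_mul E a x = 0.
  move=> a Ha; apply: IH; first by case: HE => _ H; exact: H.
  by move=> c Hc; rewrite /comm_mul !Hv ?mulr0 ?subrr //; exact: inv_mul.
exact: IH (drop_ord Hdom HE Hc) Hv.
Qed.

End Act.
Section Main.
Variables (K : fieldType) (A : comAlgType K) (gT : finGroupType)
  (act : gT -> A -> A) (Hact : alg_action act).

Lemma conj_klinear g (D : A -> A) : klinear D -> klinear (conj_op act g D).
Proof.
move=> HD c x y; rewrite /conj_op (act_lin Hact) HD (act_lin Hact) //.
Qed.

Lemma conj_ord n g (D : A -> A) : ord_le n D -> ord_le n (conj_op act g D).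
Proof.
elim: n D => [|n IH] D /= [HlD HD]; split; try exact: conj_klinear.
  by move=> a b; rewrite /conj_op (actM Hact) HD (actM Hact) (actK Hact).
move=> a; apply: ord_le_ext (IH _ (HD (act g^-1%g a))) _ => x.
by rewrite /conj_op /comm_mul (actB Hact) (actM Hact) (actM Hact) !(actK Hact).
Qed.

Lemma conj_lt d g (D : A -> A) : ord_lt d D -> ord_lt d (conj_op act g D).
Proof.
case: d => [|d] /= H; last exact: conj_ord.
by move=> a; rewrite /conj_op H (act0 Hact).
Qed.

Lemma part1 (Hdom : is_domain A) (D : A -> A) : preserves_inv act D <-> W_inv_op act D.
Proof.
split.
- move=> [[n Hn] Hp]; split; first by exists n.
  move=> g a; apply/eqP; rewrite -subr_eq0; apply/eqP.
  apply: (@vanish_zero _ _ _ _ Hact Hdom n (fsub (conj_op act g D) D)) => [|b Hb].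
    exact: ord_le_sub (conj_ord g Hn) Hn.
  by rewrite /fsub /conj_op Hb (Hp b Hb) subrr.
- move=> [Hd Hc]; split => // a Ha g.
  by rewrite -{1}(Ha g^-1%g) -[act g (D (act g^-1%g a))]/(conj_op act g D a) Hc.
Qed.

Lemma part2 (Hdom : is_domain A) (Hchar : (#|gT|%:R : K) != 0) d (D : A -> A) :
  ord_le d D -> (gr_in_sub act d D <-> gr_W_inv act d D).
Proof.
move=> HD; split.
- move=> [D' [Hp' [HD' Hlt]]] g.
  have [_ HW] := (part1 Hdom D').1 Hp'; have HWg := HW g.
  apply: (ord_lt_add (conj_lt g Hlt) (@ord_lt_scale _ _ d (-1) _ (fun x => -1 *: fsub D D' x) Hlt (fun _ => erefl))).
  move=> x; rewrite /fsub -HWg /conj_op (actB Hact) scaleN1r; ring.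
- move=> HW.
  pose c := (#|gT|%:R : K)^-1.
  pose D' := fun x => c *: \sum_(h : gT) conj_op act h D x.
  have HD' : ord_le d D'.
    apply: (@ord_le_scale _ _ d c (fun x => \sum_(h : gT) conj_op act h D x)) => //.
    exact: (ord_le_sum (fun h => conj_ord h HD)).
  exists D'; split; [|split => //].
  + apply/part1 => //; split; first by exists d.
    move=> h x; rewrite /conj_op /D' (actZ Hact).
    rewrite (big_morph (act h) (actD Hact h) (act0 Hact h)); congr (_ *: _).
    rewrite (reindex_inj (mulgI h^-1%g)) /=; apply: eq_bigr => g _.
    by rewrite /conj_op invMg invgK !(actMg Hact) !(actK Hact).
  + apply: (@ord_lt_scale _ _ d (-c) (fun x => \sum_(h : gT) fsub (conj_op act h D) D x)).
      exact: (ord_lt_sum (fun h => HW h)).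
    move=> x; rewrite /D' /fsub sumrB sumr_const -scaler_nat (_ : #|xpredT| = #|gT|) // scalerBr !scaleNr scalerA mulVf // scale1r opprK addrC.
    by congr (- (_ *: _) + _); apply: eq_bigl.

Qed.

End Main.

Theorem theorem3p1 (R : realType) (A : comAlgType (Cx R))
  (HA_fg : fin_gen_alg A) (HA_dom : is_domain A)
  (gT : finGroupType) (act : gT -> A -> A) (Hact : alg_action act) :
  (forall D : A -> A, preserves_inv act D <-> W_inv_op act D) /\
  (forall (d : nat) (D : A -> A), ord_le d D ->
     (gr_in_sub act d D <-> gr_W_inv act d D)).
Proof.
have Hchar : (#|gT|%:R : Cx R) != 0.
  rewrite pnatr_eq0 -lt0n; apply/card_gt0P; by exists 1%g.
split; first exact: part1.
by move=> d D HD; exact: part2.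
Qed.
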